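(* Fix $\theta\in\mathbb{R}$ and a value $r\in\{0,1\}$ of the encryption randomness, and let $\mathcal{E}(\rho)=\mathcal{H}^\theta_r\rho(\mathcal{H}^\theta_r)^\dagger$ be the superoperator applied by $\Xi$ to the message qubit. For $t\in[0,1]$, the scheme $\Xi$ is $(t,\tfrac{1}{2}(2^{1-t}-1))$-indistinguishable on classical message states: for every density operator $\rho=\gamma_0\lvert 0\rangle\langle 0\rvert+\gamma_1\lvert 1\rangle\langle 1\rvert$ with $H_\infty(\rho)\ge t$, $$\Big\lVert \mathcal{E}(\rho)-\tfrac{1}{2}\mathbb{I}\Big\rVert_{tr}\le \tfrac{1}{2}(2^{1-t}-1).$$
   Context: For $\theta\in\mathbb{R}$ and $u\in\{0,1\}$, $\mathcal{H}^\theta_u=\frac{1}{\sqrt{2}}\begin{bmatrix}1 & 1\\ (-1)^u e^{i\theta} & (-1)^{u+1}e^{i\theta}\end{bmatrix}$. The scheme $\Xi$ encrypts a classical message bit $b$ under secret bit $s$ and angle $\theta$ by sampling a uniformly random bit $r$ and outputting $(\mathcal{H}^\theta_r\lvert s\rangle,\mathcal{H}^\theta_r\lvert b\rangle)$; the message qubit is thus transformed by $\mathcal{H}^\theta_r$. $H_\infty(\rho)=-\log_2\max\{\gamma_0,\gamma_1\}$ is the min-entropy, $\lVert X\rVert_{tr}=\frac{1}{2}\mathrm{Tr}\sqrt{X^\dagger X}$ is the trace distance norm, and $\mathbb{I}$ is the $2\times 2$ identity. (An encryption superoperator $\mathcal{E}$ is $(t,\epsilon)$-indistinguishable if $\lVert\mathcal{E}(\rho)-\frac{1}{d}\mathbb{I}\rVert_{tr}\le\epsilon$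 for all $\rho$ with $H_\infty(\rho)\ge t$, where $d$ is the message-space dimension, here $d=2$.) *)

(* Defs.v *)
From HB Require Import structures.
From mathcomp Require Import all_boot all_order all_algebra.
From mathcomp Require Import complex.
From mathcomp Require Import all_classical all_reals all_analysis.
From Stdlib Require Import ClassicalEpsilon.
Set Implicit Arguments. Unset Strict Implicit. Unset Printing Implicit Defensive.
Import Order.TTheory GRing.Theory Num.Theory.
Local Open Scope ring_scope.
Local Open Scope complex_scope.

Definition adjmx (R : realType) (m n : nat) (A : 'M[R[i]]_(m, n)) : 'M[R[i]]_(n, m) :=
  (map_mx Num.conj A)^T.

Definition expi (R : realType) (theta : R) : R[i] := Complex (cos theta) (sin theta).

(* H^theta_u = 1/sqrt 2 [[1, 1], [(-1)^u e^{i theta}, (-1)^(u+1) e^{i theta}]] *)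
Definition Hmat (R : realType) (theta : R) (u : bool) : 'M[R[i]]_2 :=
  (Num.sqrt (2 : R))^-1%:C *:
  \matrix_(j < 2, k < 2)
     (if j == 0 :> nat then 1
      else (-1) ^+ (u + k)%N * expi theta).

Definition psd (R : realType) (S : 'M[R[i]]_2) : Prop :=
  forall v : 'cV[R[i]]_2, 0 <= (adjmx v *m S *m v) 0 0.

Definition sqrt_AdagA (R : realType) (X : 'M[R[i]]_2) : 'M[R[i]]_2 :=
  epsilon (inhabits 0) (fun S => psd S /\ S *m S = adjmx X *m X).

Definition trnorm (R : realType) (X : 'M[R[i]]_2) : R :=
  (1 / 2) * complex.Re (\tr (sqrt_AdagA X)).

Definition classical_state (R : realType) (g0 g1 : R) : 'M[R[i]]_2 :=
  \matrix_(j < 2, k < 2)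
     (if j == k then (if j == 0 :> nat then g0%:C else g1%:C) else 0).

Definition is_density_diag (R : realType) (g0 g1 : R) : Prop :=
  0 <= g0 /\ 0 <= g1 /\ g0 + g1 = 1.

Definition min_entropy (R : realType) (g0 g1 : R) : R :=
  - (ln (Num.max g0 g1) / ln 2).

Definition Enc (R : realType) (theta : R) (r : bool) (rho : 'M[R[i]]_2) :=
  Hmat theta r *m rho *m adjmx (Hmat theta r).

(* Main.v *)
Require Import Defs.
From HB Require Import structures.
From mathcomp Require Import all_boot all_order all_algebra.
From mathcomp Require Import complex.
From mathcomp Require Import all_classical all_reals all_analysis.
From mathcomp Require Import ring lra.
From Stdlib Require Import ClassicalEpsilon.
Import Order.TTheory GRing.Theory Num.Theory.
Local Open Scope ring_scope.
Local Open Scope complex_scope.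

Section S.
Variable R : realType.
Lemma kk : (Num.sqrt (2:R))^-1 * (Num.sqrt (2:R))^-1 = 1/2.
Proof. by rewrite -invfM -expr2 sqr_sqrtr // mul1r. Qed.
Lemma X00 (theta : R) (r : bool) (g0 g1 : R) : g0 + g1 = 1 ->
  (Enc theta r (classical_state g0 g1) - (1 / 2 : R)%:C%:M) 0 0 = 0.
Proof.
move=> hg.
rewrite /Enc /adjmx /Hmat /classical_state /expi; rewrite !(mxE, big_ord_recl, big_ord0) /=.
have := kk; set k := (Num.sqrt 2)^-1 => hk.
apply/eqP; rewrite eq_complex /=; apply/andP; split; apply/eqP.
nra.
nra.
Qed.
Lemma X11 (theta : R) (r : bool) (g0 g1 : R) : g0 + g1 = 1 ->
  (Enc theta r (classical_state g0 g1) - (1 / 2 : R)%:C%:M) 1 1 = 0.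
Proof.
move=> hg.
rewrite /Enc /adjmx /Hmat /classical_state /expi; rewrite !(mxE, big_ord_recl, big_ord0) /=.
have := kk; set k := (Num.sqrt 2)^-1 => hk.
have hc := cos2Dsin2 theta.
case: r; rewrite /= ?expr0 ?expr1 ?expr2;
apply/eqP; rewrite eq_complex /=; apply/andP; split; apply/eqP.
all: nra.
Qed.
Lemma quadE (S : 'M[R[i]]_2) (v : 'cV[R[i]]_2) : (adjmx v *m S *m v) 0 0 =
  Num.conj (v 0 0) * S 0 0 * v 0 0 + Num.conj (v 0 0) * S 0 1 * v 1 0
  + Num.conj (v 1 0) * S 1 0 * v 0 0 + Num.conj (v 1 0) * S 1 1 * v 1 0.
Proof.
rewrite /adjmx !(mxE, big_ord_recl, big_ord0) /=.
have -> : lift ord0 ord0 = 1 :> 'I_2 by apply/val_inj.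
ring.
Qed.
Lemma psd_quad (S : 'M[R[i]]_2) : psd S -> forall a b : R[i],
  0 <= Num.conj a * S 0 0 * a + Num.conj a * S 0 1 * b
  + Num.conj b * S 1 0 * a + Num.conj b * S 1 1 * b.
Proof.
move=> H a b; have := H (\col_i (if i == 0 then a else b)).
by rewrite quadE !mxE /=.
Qed.
Lemma herm_facts (s00 s01 s10 s11 : R[i]) :
  (forall a b : R[i], 0 <= Num.conj a*s00*a + Num.conj a*s01*b + Num.conj b*s10*a + Num.conj b*s11*b) ->
  [/\ complex.Im s00 = 0, 0 <= complex.Re s00, complex.Im s11 = 0, 0 <= complex.Re s11
   & 0 <= complex.Re (s01 * s10)].
Proof.
case: s00 => a0 b0; case: s01 => a1 b1; case: s10 => a2 b2; case: s11 => a3 b3 H.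
have := H 1 0; have := H 0 1; have := H 1 1; have := H 1 'i.
rewrite !lecE /= => /andP[/eqP h1 h2] /andP[/eqP h3 h4] /andP[/eqP h5 h6] /andP[/eqP h7 h8].
have e1 : b0 = 0 by lra.
have e2 : a2 = a1 by lra.
have e3 : b2 = - b1 by lra.
split => //; try lra.
rewrite e2 e3; nra.
Qed.
Lemma ReM (x y : R[i]) : complex.Re (x * y) = complex.Re x * complex.Re y - complex.Im x * complex.Im y.
Proof. by case: x => a b; case: y => c d. Qed.
Lemma ReD (x y : R[i]) : complex.Re (x + y) = complex.Re x + complex.Re y.
Proof. by case: x => a b; case: y => c d. Qed.
Lemma sqrt_bound (S A : 'M[R[i]]_2) : psd S -> S *m S = A ->
  complex.Re (\tr S) <= Num.sqrt (complex.Re (A 0 0)) + Num.sqrt (complex.Re (A 1 1)).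
Proof.
move=> HS HA.
have [i0 r0 i1 r1 r01] := @herm_facts _ _ _ _ (psd_quad _ HS).
rewrite -HA /mxtrace !(mxE, big_ord_recl, big_ord0) /=.
have -> : lift ord0 ord0 = 1 :> 'I_2 by apply/val_inj.
have E0 : (ord0 : 'I_2) = 0 by apply/val_inj.
rewrite !E0 !addr0 !ReD !ReM i0 i1.
rewrite ReM in r01.
apply: lerD.
  rewrite -{1}(ger0_norm r0) -sqrtr_sqr; apply: ler_wsqrtr; rewrite mulr0 subr0 expr2; lra.
rewrite -{1}(ger0_norm r1) -sqrtr_sqr; apply: ler_wsqrtr; rewrite mulr0 subr0 expr2.
lra.
Qed.
Lemma X10E (theta : R) (r : bool) (g0 g1 : R) :
  (Enc theta r (classical_state g0 g1) - (1 / 2 : R)%:C%:M) 1 0 =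
  ((Num.sqrt 2)^-1 * (Num.sqrt 2)^-1 * (g0 - g1) * (-1) ^+ r)%:C * expi theta.
Proof.
rewrite /Enc /adjmx /Hmat /classical_state /expi; rewrite !(mxE, big_ord_recl, big_ord0) /=.
set k := (Num.sqrt 2)^-1.
case: r; rewrite /= ?expr0 ?expr1 ?expr2;
apply/eqP; rewrite eq_complex /=; apply/andP; split; apply/eqP; ring.
Qed.
Lemma X01E (theta : R) (r : bool) (g0 g1 : R) :
  (Enc theta r (classical_state g0 g1) - (1 / 2 : R)%:C%:M) 0 1 =
  ((Num.sqrt 2)^-1 * (Num.sqrt 2)^-1 * (g0 - g1) * (-1) ^+ r)%:C * Num.conj (expi theta).
Proof.
rewrite /Enc /adjmx /Hmat /classical_state /expi; rewrite !(mxE, big_ord_recl, big_ord0) /=.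
set k := (Num.sqrt 2)^-1.
case: r; rewrite /= ?expr0 ?expr1 ?expr2;
apply/eqP; rewrite eq_complex /=; apply/andP; split; apply/eqP; ring.
Qed.
Lemma coef2 (g0 g1 : R) (r : bool) :
  ((Num.sqrt 2)^-1 * (Num.sqrt 2)^-1 * (g0 - g1) * (-1) ^+ r) ^+ 2 = (g0 - g1) ^+ 2 / 4.
Proof.
rewrite !exprMn exprVn sqr_sqrtr //; case: r; rewrite ?expr0 ?expr1 ?sqrrN ?expr1n; by field.

Qed.
Lemma ord2_01 (i : 'I_2) : i = 0 \/ i = 1.
Proof.
case: i => [[|[|n]] hi]; [left|right|by []]; exact: val_inj.
Qed.
Lemma ord2_cases (P : 'I_2 -> 'I_2 -> Prop) :
  P 0 0 -> P 0 1 -> P 1 0 -> P 1 1 -> forall i j, P i j.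
Proof.
move=> h00 h01 h10 h11 i j.
by case: (ord2_01 i) => ->; case: (ord2_01 j) => ->.
Qed.
Lemma normC2 (a th : R) :
  Num.conj (a%:C * expi th) * (a%:C * expi th) = (a ^+ 2)%:C.
Proof.
rewrite /expi; apply/eqP; rewrite eq_complex /=; apply/andP; split; apply/eqP.
  by transitivity (a ^+ 2 * (cos th ^+ 2 + sin th ^+ 2)); [ring | rewrite cos2Dsin2 mulr1].
ring.
Qed.
Lemma normC2' (a th : R) :
  Num.conj (a%:C * Num.conj (expi th)) * (a%:C * Num.conj (expi th)) = (a ^+ 2)%:C.
Proof.
rewrite /expi; apply/eqP; rewrite eq_complex /=; apply/andP; split; apply/eqP.
  by transitivity (a ^+ 2 * (cos th ^+ 2 + sin th ^+ 2)); [ring | rewrite cos2Dsin2 mulr1].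
ring.
Qed.
Lemma mx2_eq (A B : 'M[R[i]]_2) :
  A 0 0 = B 0 0 -> A 0 1 = B 0 1 -> A 1 0 = B 1 0 -> A 1 1 = B 1 1 -> A = B.
Proof.
move=> *; apply/matrixP; exact: (@ord2_cases (fun i j => A i j = B i j)).
Qed.
Lemma AE (X : 'M[R[i]]_2) (a th : R) :
  X 0 0 = 0 -> X 1 1 = 0 -> X 1 0 = a%:C * expi th -> X 0 1 = a%:C * Num.conj (expi th) ->
  adjmx X *m X = (a ^+ 2)%:C%:M.
Proof.
move=> h00 h11 h10 h01; apply: mx2_eq.
all: rewrite /adjmx !(mxE, big_ord_recl, big_ord0) /=.
all: (have -> : lift ord0 ord0 = 1 :> 'I_2 by apply/val_inj).
all: (have E0 : (ord0 : 'I_2) = 0 by apply/val_inj); rewrite ?E0.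
- rewrite h00. rewrite mulr0. rewrite add0r. rewrite h10. rewrite normC2. by rewrite addr0.
- by rewrite h00 h11 !(mulr0, mul0r, rmorph0, addr0, add0r, mulr0n).
- by rewrite h00 h11 !(mulr0, mul0r, rmorph0, addr0, add0r, mulr0n).
- by rewrite h11 h01 mulr0 addr0 normC2' addr0.
Qed.


Lemma real_bound (t g0 g1 : R) : 0 <= g0 -> 0 <= g1 -> g0 + g1 = 1 ->
  t <= min_entropy g0 g1 -> 2 * Num.max g0 g1 <= 2 `^ (1 - t).
Proof.
move=> h0 h1 hs; rewrite /min_entropy; set m := Num.max g0 g1 => hent.
have hm0 : g0 <= m by rewrite le_max lexx.
have hm1 : g1 <= m by rewrite le_max lexx orbT.
have mpos : 0 < m by lra.
have l2 : 0 < ln (2:R) by apply: ln_gt0; lra.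
have hl : ln m <= - t * ln 2.
  have := ler_wpM2r (ltW l2) hent.
  rewrite mulNr divfK ?gt_eqF //; lra.
rewrite /powR (_ : ((2:R) == 0) = false); last by apply/negbTE; rewrite pnatr_eq0.
have -> : (1 - t) * ln (2:R) = ln 2 + (- t * ln 2) by ring.
rewrite expRD lnK; last by rewrite posrE; lra.
rewrite ler_pM2l; last lra.
have em : expR (ln m) = m by rewrite lnK // posrE.
by rewrite -em ler_expR.
Qed.
End S.

Theorem theorem3 (R : realType) (theta : R) (r : bool) (t : R)
  (ht : 0 <= t <= 1) (g0 g1 : R) :
  is_density_diag g0 g1 ->
  t <= min_entropy g0 g1 ->
  trnorm (Enc theta r (classical_state g0 g1) - (1 / 2 : R)%:C%:M)
    <= (1 / 2) * (2 `^ (1 - t) - 1).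
Proof.
move=> [h0 [h1 hs]] hent.
have hR := @real_bound R t g0 g1 h0 h1 hs hent.
have hm0 : g0 <= Num.max g0 g1 by rewrite le_max lexx.
have hm1 : g1 <= Num.max g0 g1 by rewrite le_max lexx orbT.
have haB : `|(Num.sqrt (2:R))^-1 * (Num.sqrt (2:R))^-1 * (g0 - g1) * (-1) ^+ r| <= (2 `^ (1 - t) - 1) / 2.
  rewrite ler_norml kk; case: r; rewrite /= ?expr0 ?expr1; apply/andP; split; lra.
set X := Enc theta r (classical_state g0 g1) - _.
set a := (Num.sqrt (2:R))^-1 * (Num.sqrt (2:R))^-1 * (g0 - g1) * (-1) ^+ r.
have hA : adjmx X *m X = (a ^+ 2)%:C%:M.
  apply: AE; [exact: X00 | exact: X11 | exact: X10E | exact: X01E].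
rewrite /trnorm /sqrt_AdagA.
have hex : exists S, psd S /\ S *m S = adjmx X *m X.
  exists (`|a|%:C)%:M; split.
    move=> v; rewrite quadE !mxE /=.
    have na := normr_ge0 a.
    move: (v 0 0) (v 1 0) => [x y] [z w]; rewrite lecE /=.
    apply/andP; split; first by apply/eqP; ring.
    have hx := sqr_ge0 x; have hy := sqr_ge0 y; have hz := sqr_ge0 z; have hw := sqr_ge0 w.
    rewrite !expr2 in hx hy hz hw; nra.
  rewrite hA -scalar_mxM; congr (_%:M); apply/eqP; rewrite eq_complex /=.
  apply/andP; split; apply/eqP; last by ring.
  by rewrite mulr0 subr0 -expr2 real_normK ?num_real.
have [HS HSS] := epsilon_spec (inhabits (0:'M[R[i]]_2))
  (fun S => psd S /\ S *m S = adjmx X *m X) hex.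
have := @sqrt_bound R _ _ HS HSS; rewrite hA !mxE /= => hb.
rewrite sqrtr_sqr in hb.
lra.
Qed.
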